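(* Let $d\ge1$ and $k\ge1$ be integers and let $G=(V,D)$ be a $k$-fold $\mathcal{R}_d$-circuit with at most two technicolour vertices. Then $G$ is a balanced $k$-fold $\mathcal{R}_d$-circuit.
   Context: For a graph $G=(V,E)$ and a generic $p:V\to\mathbb{R}^d$ (coordinates algebraically independent over $\mathbb{Q}$), the rigidity matrix $R(G,p)$ is the $|E|\times d|V|$ matrix whose row for $uv\in E$ has $p(u)-p(v)$ in the $d$ columns of $u$, $p(v)-p(u)$ in the $d$ columns of $v$, and zeros elsewhere. The generic $d$-dimensional rigidity matroid $\mathcal{R}_d$ is the row matroid of this matrix for the complete graph on a vertex set containing $V$; its rank function is $r_d$ and closure operator $\mathrm{cl}(X)=\{x: r_d(X\cup\{x\})=r_d(X)\}$. Graphs are identified with their edge sets. A set $D$ of edges is cyclic if it is a union of circuits of $\mathcal{R}_d$. For $k\ge0$, a graph $G=(V,D)$ is a $k$-fold $\mathcal{R}_d$-circuit if $D$ is cyclic and $r_d(D)=|D|-k$. For $k\ge1$, the principal partition of $D$ is the partition $\{A_1,\dots,A_\ell\}$ of $D$ such that $\{D\setminus A_i\}$ is exactly the set of $(k-1)$-fold $\mathcal{R}_d$-circuits contained in $D$. A vertex is technicolour if it is incident with edges of $D$ from at least two different parts of the principal partition, and monochromatic otherwise. $G$ is balanced if $r_d\big(\bigcap_{i=1}^\ell \mathrm{cl}(D\setminus A_i)\big)=\ell-k$. *)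

(* Defs.v *)
From HB Require Import structures.
From mathcomp Require Import all_boot all_order all_algebra.
From mathcomp Require Import boolp Rstruct.
From Stdlib Require Rdefinitions.

Set Implicit Arguments.
Unset Strict Implicit.
Unset Printing Implicit Defensive.

Import Order.TTheory GRing.Theory Num.Theory.
Local Open Scope ring_scope.

(* Vertices of the complete graph K_n are 'I_n; an edge uv is the ordered
   pair (u,v) with u < v. *)
Definition edge (n : nat) := {x : 'I_n * 'I_n | (nat_of_ord x.1 < nat_of_ord x.2)%N}.

(* A placement (framework) p : vertices -> R^d, stored as an n x d matrix;
   row w of p is p(w). *)
Definition placement (n d : nat) := 'M[Rdefinitions.R]_(n, d).

Definition rigidity_row n d (p : placement n d) (e : edge n) : 'rV[Rdefinitions.R]_(n * d) :=
  let u := (val e).1 in let v := (val e).2 in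
  mxvec (\matrix_(w < n, i < d)
           (if w == u then p u i - p v i
            else if w == v then p v i - p u i else 0)).

Definition rig_rank n d (p : placement n d) (X : {set edge n}) : nat :=
  \rank (\sum_(e in X) <<rigidity_row p e>>)%MS.

(* Generic d-dimensional rigidity rank r_d: the rank attained at a generic
   placement, which is the maximum of rig_rank over all real placements. *)
Definition rd n d (X : {set edge n}) : nat :=
  \max_(k < #|X|.+1 | `[< exists p : placement n d, rig_rank p X = k >]) k.

Definition rcl n d (X : {set edge n}) : {set edge n} :=
  [set x | rd d (x |: X) == rd d X].

Definition independent n d (X : {set edge n}) : bool := rd d X == #|X|.

Definition circuit n d (C : {set edge n}) : bool :=
  ~~ independent d C && [forall Y : {set edge n}, (Y \proper C) ==> independent d Y].

Definition cyclic n d (D : {set edge n}) : bool :=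
  [forall e in D, exists C : {set edge n}, [&& circuit d C, C \subset D & e \in C]].

Definition kfold_circuit n d (k : nat) (D : {set edge n}) : bool :=
  cyclic d D && (rd d D + k == #|D|)%N.

Definition principal_partition n d (k : nat) (D : {set edge n})
    (P : {set {set edge n}}) : bool :=
  partition P D &&
  ([set D :\: A | A in P] == [set S : {set edge n} | (S \subset D) && kfold_circuit d k.-1 S]).

Definition incident n (v : 'I_n) (e : edge n) : bool :=
  ((val e).1 == v) || ((val e).2 == v).

Definition technicolour n (D : {set edge n}) (P : {set {set edge n}}) : {set 'I_n} :=
  [set v | [exists A in P, exists B in P,
     (A != B) && [exists e in A, exists f in B, incident v e && incident v f]]].

Definition balanced n d (k : nat) (D : {set edge n}) (P : {set {set edge n}}) : Prop :=
  (rd d (\bigcap_(A in P) rcl d (D :\: A)))%:Z = (#|P|%:Z - k%:Z)%R.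

(* Main.v *)
Require Import Defs.
From mathcomp Require Import all_boot all_order all_algebra.
From mathcomp Require Import boolp Rstruct ring zify.
From Stdlib Require Rdefinitions.
Set Implicit Arguments. Unset Strict Implicit. Unset Printing Implicit Defensive.
Import Order.TTheory GRing.Theory Num.Theory.
Local Open Scope ring_scope.

Notation RR := Rdefinitions.R.

Lemma minor_exists (m N : nat) (A : 'M[RR]_(m,N)) :
  exists (f : 'I_(\rank A) -> 'I_m) (g : 'I_(\rank A) -> 'I_N), mxsub f g A \in unitmx.
Proof.
set B := rowsub (maxrankfun A) A.
have fB : row_free B := maxrowsub_free A.
have fullBT : row_full B^T.
  by rewrite /row_full mxrank_tr.
exists (maxrankfun A), (fullrankfun fullBT).
rewrite -unitmx_tr trmx_mxsub.
have := fullrowsub_unit fullBT.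
congr (_ \in unitmx); apply/matrixP => i j; rewrite !mxE.
done.
Qed.

Lemma minor_rank (m N r : nat) (A : 'M[RR]_(m,N)) (f : 'I_r -> 'I_m) (g : 'I_r -> 'I_N) :
  mxsub f g A \in unitmx -> (r <= \rank A)%N.
Proof.
rewrite -row_free_unit => /eqP <-.
have -> : mxsub f g A = rowsub f (colsub g A) by apply/matrixP => i j; rewrite !mxE.
apply: leq_trans (mxrankS (rowsub_sub _ _)) _.
rewrite -mxrank_tr -[X in (_ <= X)%N]mxrank_tr.
have -> : (colsub g A)^T = rowsub g A^T by apply/matrixP => i j; rewrite !mxE.
exact: mxrankS (rowsub_sub _ _).
Qed.

Lemma poly_rank m N (A B : 'M[RR]_(m,N)) (r : nat) (t0 : RR) :
  (r <= \rank (A + t0 *: B)%R)%N ->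
  exists P : {poly RR}, P != 0 /\ forall t, P.[t] != 0 -> (r <= \rank (A + t *: B)%R)%N.
Proof.
move=> hr; have [f [g U]] := minor_exists (A + t0 *: B)%R.
pose M : 'M[{poly RR}]_(m,N) := map_mx polyC A + 'X *: map_mx polyC B.
have ev : forall t, map_mx (horner_eval t) (mxsub f g M) = mxsub f g (A + t *: B).
  move=> t; apply/matrixP => i j; rewrite !mxE /horner_eval.
  rewrite hornerD hornerC mulrC hornerMX hornerC; by rewrite mulrC.
have evd : forall t, (\det (mxsub f g M)).[t] = \det (mxsub f g (A + t *: B)).
  by move=> t; rewrite -ev det_map_mx.
exists (\det (mxsub f g M)); split.
  apply/negP => /eqP h; move: U; rewrite unitmxE unitfE -(evd t0) h horner0 eqxx //.
move=> t ht; apply: leq_trans hr (@minor_rank _ _ _ _ f g _).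
by rewrite unitmxE unitfE -(evd t).
Qed.

Lemma nonroot (P : {poly RR}) : P != 0 -> exists t, P.[t] != 0.
Proof.
move=> nz; case: (pselect (exists t, P.[t] != 0)) => // H; exfalso.
have all0 : forall t, P.[t] = 0.
  by move=> t; apply/eqP/negPn/negP => h; apply: H; exists t.
pose rs := [seq (i%:R : RR) | i <- iota 0 (size P)].
have h1 : all (root P) rs by apply/allP => x _; rewrite /root all0.
have h2 : uniq rs.
  rewrite map_inj_uniq ?iota_uniq // => i j /eqP; rewrite eqr_nat => /eqP.
  done.
have := max_poly_roots nz h1 h2.
by rewrite size_map size_iota ltnn.
Qed.

Lemma line_ok (T : eqType) (s : seq T) (Good : T -> RR -> Prop) :
  (forall y, y \in s -> exists P : {poly RR}, P != 0 /\ forall t, P.[t] != 0 -> Good y t) ->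
  exists t, forall y, y \in s -> Good y t.
Proof.
move=> H.
suff [Q [nzQ HQ]] : exists Q : {poly RR}, Q != 0 /\ forall t, Q.[t] != 0 -> forall y, y \in s -> Good y t.
  by have [t ht] := nonroot nzQ; exists t; apply: HQ.
elim: s H => [|x s IH] H.
  by exists 1; split; [exact: oner_neq0 | move=> t _ y].
have [Q [nzQ HQ]] : exists Q : {poly RR}, Q != 0 /\ forall t, Q.[t] != 0 -> forall y, y \in s -> Good y t.
  by apply: IH => y ys; apply: H; rewrite inE ys orbT.
have [P [nzP HP]] := H x (mem_head _ _).
exists (P * Q); split; first by rewrite mulf_neq0.
move=> t; rewrite hornerM mulf_eq0 negb_or => /andP [hP hQ] y; rewrite inE => /orP [/eqP -> |ys].
  exact: HP.
exact: HQ.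
Qed.
Section Rig.
Variables (n d : nat).

Definition Mrig (p : placement n d) (e : edge n) : 'M[RR]_(n,d) :=
  \matrix_(w < n, i < d)
    (if w == (val e).1 then p (val e).1 i - p (val e).2 i
     else if w == (val e).2 then p (val e).2 i - p (val e).1 i else 0).

Lemma rowE' (p : placement n d) e : rigidity_row p e = mxvec (Mrig p e).
Proof. by []. Qed.

Lemma Mrig_lin (q w : placement n d) (t : RR) e :
  Mrig (q + t *: w) e = Mrig q e + t *: Mrig w e.
Proof.
apply/matrixP => a i; rewrite !mxE.
case: ifP => _; first by rewrite ?mxE; ring.
case: ifP => _; first by rewrite ?mxE; ring.
by rewrite mulr0 addr0.
Qed.

Lemma row_lin (q w : placement n d) (t : RR) e :
  rigidity_row (q + t *: w) e = rigidity_row q e + t *: rigidity_row w e.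
Proof. by rewrite !rowE' Mrig_lin linearD linearZ. Qed.

Definition Rmat (p : placement n d) (Y : {set edge n}) : 'M[RR]_(#|{: edge n}|, n * d) :=
  \matrix_(i, j) (if enum_val i \in Y then rigidity_row p (enum_val i) 0 j else 0).

Lemma Rmat_lin (q w : placement n d) (t : RR) Y :
  Rmat (q + t *: w) Y = Rmat q Y + t *: Rmat w Y.
Proof.
apply/matrixP => i j; rewrite !mxE row_lin.
by case: ifP => _; rewrite ?mxE // mulr0 addr0.
Qed.

Lemma Rmat_rank (p : placement n d) (Y : {set edge n}) : \rank (Rmat p Y) = rig_rank p Y.
Proof.
apply: eqmx_rank; apply/andP; split.
  apply/row_subP => i.
  have -> : row i (Rmat p Y) = if enum_val i \in Y then rigidity_row p (enum_val i) else 0.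
    by apply/rowP => j; rewrite !mxE; case: ifP => //; rewrite mxE.
  case: ifP => hY; last by rewrite sub0mx.
  by apply: (sumsmx_sup (enum_val i)) => //; rewrite genmxE.
apply/sumsmx_subP => e he; rewrite genmxE.
have <- : row (enum_rank e) (Rmat p Y) = rigidity_row p e.
  by apply/rowP => j; rewrite !mxE enum_rankK he.
exact: row_sub.
Qed.

Lemma rig_le_card (p : placement n d) (Y : {set edge n}) : (rig_rank p Y <= #|Y|)%N.
Proof.
rewrite /rig_rank -sum1_card.
elim/big_rec2: _ => [|e k M _ IH]; first by rewrite mxrank0.
apply: leq_trans (mxrank_adds_leqif _ _).1 _.
rewrite mxrank_gen; have := rank_leq_row (rigidity_row p e); lia.
Qed.

Lemma rig_le_rd (p : placement n d) (Y : {set edge n}) : (rig_rank p Y <= rd d Y)%N.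
Proof.
rewrite /rd.
have h : (rig_rank p Y < #|Y|.+1)%N by rewrite ltnS rig_le_card.
apply: (@leq_bigmax_cond _ _ (fun k : 'I_#|Y|.+1 => nat_of_ord k) (Ordinal h)).
by apply/asboolP; exists p.
Qed.

Lemma rd_attained (Y : {set edge n}) : exists p : placement n d, rig_rank p Y = rd d Y.
Proof.
rewrite /rd.
have h : (rig_rank (0%R : placement n d) Y < #|Y|.+1)%N by rewrite ltnS rig_le_card.
pose A := (fun k : 'I_#|Y|.+1 => `[< exists p : placement n d, rig_rank p Y = k >]).
have hA : (0 < #|A|)%N.
  by apply/card_gt0P; exists (Ordinal h); rewrite /A unfold_in /=; apply/asboolP; exists (0%R : placement n d).
have [k hk ->] := @eq_bigmax_cond _ A (fun k => nat_of_ord k) hA.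
by move: hk; rewrite /A unfold_in /= => /asboolP.
Qed.

Lemma generic : exists p : placement n d, forall Y, rig_rank p Y = rd d Y.
Proof.
suff [q hq] : exists q : placement n d, forall Y, Y \in enum {: {set edge n}} -> (rd d Y <= rig_rank q Y)%N.
  by exists q => Y; apply/eqP; rewrite eqn_leq rig_le_rd hq // mem_enum.
elim: (enum _) => [|X s [q hq]].
  by exists 0%R.
have [pX hX] := rd_attained X.
have H : forall Y, Y \in X :: s -> exists P : {poly RR}, P != 0 /\ forall t, P.[t] != 0 -> (rd d Y <= rig_rank (q + t *: (pX - q))%R Y)%N.
  move=> Y hY.
  have key : forall t0, (rd d Y <= rig_rank (q + t0 *: (pX - q))%R Y)%N -> exists P : {poly RR}, P != 0 /\ forall t, P.[t] != 0 -> (rd d Y <= rig_rank (q + t *: (pX - q))%R Y)%N.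
    move=> t0; rewrite -!Rmat_rank Rmat_lin => h.
    have [P [nzP HP]] := poly_rank h.
    by exists P; split => // t /HP; rewrite -Rmat_rank Rmat_lin.
  move: hY; rewrite inE => /orP [/eqP eY | ys].
    by apply: (key 1); rewrite eY scale1r addrC subrK hX.
  by apply: (key 0); rewrite scale0r addr0; exact: hq.
have [t ht] := line_ok H.
by exists (q + t *: (pX - q))%R.
Qed.

End Rig.

Section Main.
Variables (n d : nat) (p : placement n d).
Implicit Types (X Y D : {set edge n}) (s : seq {set edge n}) (P : {set {set edge n}}).

Definition span (X : {set edge n}) : 'M[RR]_(n*d) := (\sum_(e in X) <<rigidity_row p e>>)%MS.

Lemma rig_span X : rig_rank p X = \rank (span X).
Proof. by []. Qed.

Lemma span_sub X k (M : 'M_(k, n*d)) :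
  (forall e, e \in X -> (rigidity_row p e <= M)%MS) -> (span X <= M)%MS.
Proof. by move=> H; apply/sumsmx_subP => e he; rewrite genmxE; exact: H. Qed.

Lemma vr_span X e : e \in X -> (rigidity_row p e <= span X)%MS.
Proof. by move=> he; apply: (sumsmx_sup e) => //; rewrite genmxE. Qed.

Lemma span_mono X Y : X \subset Y -> (span X <= span Y)%MS.
Proof. by move=> sXY; apply: span_sub => e he; apply: vr_span; exact: (subsetP sXY). Qed.

Lemma rcl_span (hp : forall Y, rig_rank p Y = rd d Y) X x :
  (x \in rcl d X) = (rigidity_row p x <= span X)%MS.
Proof.
rewrite /rcl inE -!hp !rig_span.
case hx: (x \in X).
  have -> : x |: X = X by apply/setP => y; rewrite !inE; case: eqP => // ->.
  by rewrite eqxx vr_span.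
rewrite /span big_setU1 ?hx //= -/(span X).
have := mxrank_leqif_sup (addsmxSr (<<rigidity_row p x>>)%MS (span X)).
move=> [_ h]; rewrite eq_sym h.
by rewrite addsmx_sub genmxE submx_refl andbT.
Qed.

Definition Ucap (D : {set edge n}) (s : seq {set edge n}) : 'M[RR]_(n*d) :=
  foldr (fun A M => (span (D :\: A) :&: M)%MS) (span D) s.

Lemma Ucap_subW D s : (Ucap D s <= span D)%MS.
Proof. elim: s => [|A s IH] /=; first exact: submx_refl. exact: submx_trans (capmxSr _ _) IH. Qed.

Lemma Ucap_sub D s A : A \in s -> (Ucap D s <= span (D :\: A))%MS.
Proof.
elim: s => [|B s IH] //=; rewrite inE => /orP [/eqP -> | h]; first exact: capmxSl.
exact: submx_trans (capmxSr _ _) (IH h).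
Qed.

Lemma sub_Ucap D s m (y : 'M_(m, n*d)) : (y <= span D)%MS ->
  (forall A, A \in s -> (y <= span (D :\: A))%MS) -> (y <= Ucap D s)%MS.
Proof.
move=> hD; elim: s => [|A s IH] H //=.
rewrite sub_capmx H ?mem_head // IH // => B hB; apply: H; by rewrite inE hB orbT.
Qed.

Definition Rest (D : {set edge n}) (s : seq {set edge n}) := [set e in D | all (fun A : {set edge n} => e \notin A) s].

Lemma Ucap_rank D P s : partition P D ->
  (forall A, A \in P -> \rank (span (D :\: A)) + (#|A| - 1) = \rank (span D))%N ->
  uniq s -> {subset s <= P} ->
  (span (Rest D s) <= Ucap D s)%MS /\ (\rank (Ucap D s) + \sum_(A <- s) (#|A| - 1) = \rank (span D))%N.
Proof.
move=> hpart hA; elim: s => [|A s IH] /=.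
  move=> _ _; split; last by rewrite big_nil addn0.
  by apply: span_mono; apply/subsetP => e; rewrite inE => /andP[].
move=> /andP [Ans us] sub.
have subs : {subset s <= P} by move=> B hB; apply: sub; rewrite inE hB orbT.
have [IH1 IH2] := IH us subs.
have AP : A \in P := sub A (mem_head _ _).
split.
  rewrite sub_capmx; apply/andP; split.
    by apply: span_mono; apply/subsetP => e; rewrite !inE /= => /andP [eD /andP [eA _]]; rewrite eA eD.
  apply: submx_trans IH1; apply: span_mono; apply/subsetP => e.
  by rewrite !inE /= => /andP [eD /andP [_ es]]; rewrite eD es.
rewrite big_cons.
set S := span (D :\: A); set U := Ucap D s.
have hsum : \rank (S + U)%MS = \rank (span D).
  apply: eqmx_rank; apply/andP; split.
    by rewrite addsmx_sub (span_mono (subsetDl D A)) Ucap_subW.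
  apply: span_sub => e eD.
  case eA: (e \in A).
    apply: submx_trans (addsmxSr S U); apply: submx_trans IH1; apply: vr_span.
    rewrite inE eD /=; apply/allP => B Bs.
    have BP := subs B Bs.
    have nAB : A != B by apply: contraNneq Ans => ->.
    move: hpart => /and3P [_ triv _].
    by rewrite (disjointFr ((trivIsetP triv) A B AP BP nAB) eA).
  by apply: submx_trans (addsmxSl S U); apply: vr_span; rewrite inE eA eD.
have := mxrank_sum_cap S U; rewrite hsum.
have := hA A AP; rewrite -/S => h1 h2.
rewrite /= -/S -/U. move: h1 h2 IH2. rewrite -/U.
have ar : forall a b c0 e f g : nat, (e + c0 = b -> b + a = e + f -> f + g = b -> a + (c0 + g) = b)%N.
  by move=> *; lia.
exact: ar.
Qed.


Lemma span_decomp X (y : 'rV[RR]_(n*d)) : (y <= span X)%MS ->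
  exists c : edge n -> RR, vec_mx y = \sum_(e in X) c e *: Mrig p e.
Proof.
move/sub_sumsmxP => [u hu].
exists (fun e => (u e *m (<<rigidity_row p e>>)%MS *m pinvmx (rigidity_row p e)) 0 0).
rewrite hu linear_sum; apply: eq_bigr => e _.
have h : (<<rigidity_row p e>> <= rigidity_row p e)%MS by rewrite genmxE.
rewrite -{1}(mulmxKpV h) !mulmxA.
by rewrite [X in X *m _]mx11_scalar mul_scalar_mx linearZ /= rowE' mxvecK.
Qed.

Lemma span_entry X (y : 'rV[RR]_(n*d)) : (y <= span X)%MS ->
  exists c : edge n -> RR, forall w i, vec_mx y w i = \sum_(e in X) c e * Mrig p e w i.
Proof.
move/span_decomp => [c hc]; exists c => w i; rewrite hc summxE.
by apply: eq_bigr => e _; rewrite mxE.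
Qed.

Lemma Mrig_zero e w i : ~~ incident w e -> Mrig p e w i = 0.
Proof.
rewrite /incident mxE => /norP [h1 h2].
by rewrite eq_sym (negPf h1) eq_sym (negPf h2).
Qed.

Lemma sum_two (F : 'I_n -> RR) a b : a != b ->
  (forall w, w != a -> w != b -> F w = 0) -> \sum_w F w = F a + F b.
Proof.
move=> ab H; rewrite (bigD1 a) //= (bigD1 b) /=; last by rewrite eq_sym.
rewrite big1 ?addr0 // => w /andP [wb wa]; exact: H.
Qed.

Lemma edge_neq (e : edge n) : (val e).1 != (val e).2.
Proof. apply/eqP => h; have := valP e; by rewrite /= h ltnn. Qed.

Lemma Mrig_two e w i : w != (val e).1 -> w != (val e).2 -> Mrig p e w i = 0.
Proof. by move=> h1 h2; apply: Mrig_zero; rewrite /incident !(eq_sym _ w) negb_or h1 h2. Qed.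

Lemma Mrig_colsum e i : \sum_w Mrig p e w i = 0.
Proof.
rewrite (sum_two (edge_neq e)); last by move=> w h1 h2; apply: Mrig_two.
rewrite !mxE eqxx eq_sym (negPf (edge_neq e)) eqxx; ring.
Qed.

Lemma Mrig_rot e i j : \sum_w (Mrig p e w i * p w j - Mrig p e w j * p w i) = 0.
Proof.
rewrite (sum_two (edge_neq e)); last by move=> w h1 h2; rewrite !Mrig_two // !mul0r subrr.
rewrite !mxE eqxx eq_sym (negPf (edge_neq e)) eqxx; ring.
Qed.

Lemma span_colsum X (y : 'rV[RR]_(n*d)) i : (y <= span X)%MS -> \sum_w vec_mx y w i = 0.
Proof.
move/span_entry => [c hc].
under eq_bigr do rewrite hc.
rewrite exchange_big /=; apply: big1 => e _.
by rewrite -mulr_sumr Mrig_colsum mulr0.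
Qed.

Lemma span_rot X (y : 'rV[RR]_(n*d)) i j : (y <= span X)%MS ->
  \sum_w (vec_mx y w i * p w j - vec_mx y w j * p w i) = 0.
Proof.
move/span_entry => [c hc].
have -> : \sum_w (vec_mx y w i * p w j - vec_mx y w j * p w i) =
   \sum_w \sum_(e in X) c e * (Mrig p e w i * p w j - Mrig p e w j * p w i).
  apply: eq_bigr => w _; rewrite !hc !mulr_suml -sumrB; apply: eq_bigr => e _; ring.
rewrite exchange_big /=; apply: big1 => e _.
by rewrite -mulr_sumr Mrig_rot mulr0.
Qed.

Lemma vanish D P (y : 'rV[RR]_(n*d)) w i : partition P D ->
  (y <= Ucap D (enum P))%MS -> w \notin technicolour D P -> vec_mx y w i = 0.
Proof.
move=> hpart hy hw.
move: (hpart) => /and3P [/eqP cov triv n0].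
case: (boolP [exists e in D, incident w e]) => [/existsP [e /andP [eD we]] | none].
  have : e \in cover P by rewrite cov.
  case/bigcupP => A AP eA.
  have hA : (y <= span (D :\: A))%MS.
    by apply: submx_trans hy (Ucap_sub _ _); rewrite mem_enum.
  have [c hc] := span_entry hA.
  rewrite hc big1 // => f; rewrite inE => /andP [fA fD].
  rewrite Mrig_zero ?mulr0 //; apply/negP => wf.
  have : f \in cover P by rewrite cov.
  case/bigcupP => B BP fB.
  have AB : A != B by apply: contraNneq fA => ->.
  apply: (negP hw); rewrite inE; apply/existsP; exists A; rewrite AP /=.
  apply/existsP; exists B; rewrite BP AB /=.
  apply/existsP; exists e; rewrite eA /=; apply/existsP; exists f; by rewrite fB we wf.
have hD : (y <= span D)%MS by apply: submx_trans hy (Ucap_subW _ _).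
have [c hc] := span_entry hD.
rewrite hc big1 // => f fD; rewrite Mrig_zero ?mulr0 //.
move/existsPn: none => /(_ f); by rewrite fD.
Qed.

Lemma two_vertex (e0 : edge n) (y : 'rV[RR]_(n*d)) :
  rigidity_row p e0 != 0 ->
  (forall w i, w != (val e0).1 -> w != (val e0).2 -> vec_mx y w i = 0) ->
  (forall i, \sum_w vec_mx y w i = 0) ->
  (forall i j, \sum_w (vec_mx y w i * p w j - vec_mx y w j * p w i) = 0) ->
  (y <= rigidity_row p e0)%MS.
Proof.
move=> nz hz hc hr.
set a := (val e0).1; set b := (val e0).2.
have ab : a != b := edge_neq e0.
set Y := vec_mx y.
have hb : forall i, Y b i = - Y a i.
  move=> i; have := hc i; rewrite (sum_two ab (fun w => hz w i)) => h.
  by apply: (addrI (Y a i)); rewrite h subrr.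
have hrot : forall i j, Y a i * (p a j - p b j) = Y a j * (p a i - p b i).
  move=> i j; have := hr i j; rewrite (sum_two ab) => [h|w wa wb]; last by rewrite !hz // !mul0r subrr.
  rewrite !hb in h; apply/eqP; rewrite -subr_eq0; apply/eqP; rewrite -h; ring.
have [i0 hi0] : exists i0, p a i0 - p b i0 != 0.
  case: (pselect (exists i0, p a i0 - p b i0 != 0)) => // H; exfalso.
  move/negP: nz; apply; rewrite rowE'.
  have -> : Mrig p e0 = 0.
    apply/matrixP => w i; rewrite !mxE -/a -/b.
    have hi : p a i - p b i = 0 by apply/eqP/negPn/negP => h; apply: H; exists i.
    case: ifP => _; first by [].
    by case: ifP => _ //; rewrite -opprB hi oppr0.
  by rewrite linear0.
set c := Y a i0 / (p a i0 - p b i0).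
have ha : forall j, Y a j = c * (p a j - p b j).
  move=> j; apply: (mulIf hi0); rewrite -hrot /c [RHS]mulrAC divfK //.
have -> : y = c *: rigidity_row p e0.
  rewrite -[y]vec_mxK rowE' -linearZ; congr mxvec; apply/matrixP => w j; rewrite [in RHS]mxE [in RHS]mxE -/a -/b.
  case: eqP => [-> | wa]; first exact: ha.
  case: eqP => [-> | wb]; first by rewrite hb ha -mulrN opprB.
  by rewrite hz ?mulr0 //; apply/eqP.
by rewrite scalemx_sub.
Qed.

End Main.

Lemma row_nz n d (p : placement n d) (hd : (0 < d)%N)
  (hp : forall Y, rig_rank p Y = rd d Y) (e : edge n) : rigidity_row p e != 0.
Proof.
pose p1 : placement n d := \matrix_(w, i) (if w == (val e).1 then 1 else 0).
have h1 : rigidity_row p1 e != 0.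
  apply/eqP => /matrixP /(_ 0 (mxvec_index (val e).1 (Ordinal hd))).
  rewrite rowE' mxvecE !mxE eqxx eq_sym (negPf (edge_neq e)) subr0 => /eqP.
  by rewrite oner_eq0.
have : (1 <= rd d [set e])%N.
  apply: leq_trans (rig_le_rd p1 _).
  by rewrite rig_span /span big_set1 mxrank_gen lt0n mxrank_eq0.
by rewrite -hp rig_span /span big_set1 mxrank_gen lt0n mxrank_eq0.
Qed.

Theorem theorem3p12 (n d k : nat) (D : {set edge n}) (P : {set {set edge n}}) :
  (1 <= d)%N -> (1 <= k)%N ->
  kfold_circuit d k D ->
  principal_partition d k D P ->
  (#|technicolour D P| <= 2)%N ->
  balanced d k D P.
Proof.
move=> hd hk /andP [_ /eqP hD] /andP [hpart /eqP hPP] hT.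
have [p hp] := generic n d.
have AsubD : forall A, A \in P -> A \subset D.
  move: (hpart) => /and3P [/eqP cov _ _] A AP; rewrite -cov; exact: bigcup_sup.
have Ane : forall A, A \in P -> (0 < #|A|)%N.
  move: (hpart) => /and3P [_ _ n0] A AP; rewrite card_gt0; apply: contraNneq n0 => <-; exact: AP.
have hA : forall A, A \in P -> (\rank (span p (D :\: A)) + (#|A| - 1) = \rank (span p D))%N.
  move=> A AP.
  have : D :\: A \in [set D :\: A0 | A0 in P] by apply: imset_f.
  rewrite hPP inE => /andP [_ /andP [_ /eqP hkA]].
  rewrite -!rig_span !hp.
  move: hkA; rewrite cardsD (setIidPr (AsubD A AP)) -subn1.
  have := Ane A AP; have := subset_leq_card (AsubD A AP).
  move: hD; lia.
have hsumP : (\sum_(A <- enum P) (#|A| - 1) + #|P| = #|D|)%N.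
  have -> : #|P| = (\sum_(A in P) 1)%N by rewrite sum1_card.
  rewrite big_enum /= (card_partition hpart) -big_split /=.
  by apply: eq_bigr => A AP; rewrite subnK // Ane.
have senum : {subset enum P <= P} by move=> A; rewrite mem_enum.
have [_ hU] := Ucap_rank hpart hA (enum_uniq _) senum.
set U := Ucap p D (enum P).
have hUk : (\rank U + k = #|P|)%N.
  move: hU; rewrite -rig_span hp -/U; move: hsumP hD.
  have ar : forall s0 l D' r0 k0 r : nat, (s0 + l = D' -> r0 + k0 = D' -> r + s0 = r0 -> r + k0 = l)%N by move=> *; lia.
  exact: ar.
set I := \bigcap_(A in P) rcl d (D :\: A).
have hI1 : forall x, x \in I -> forall A, A \in P -> (rigidity_row p x <= span p (D :\: A))%MS.
  by move=> x /bigcapP H A AP; rewrite -(rcl_span hp); exact: H.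
have hI2 : forall x, (forall A, A \in P -> (rigidity_row p x <= span p (D :\: A))%MS) -> x \in I.
  by move=> x H; apply/bigcapP => A AP; rewrite (rcl_span hp); exact: H.
have [A0 A0P] : exists A0, A0 \in P.
  by apply/card_gt0P; rewrite -hUk; lia.
have sIU : (span p I <= U)%MS.
  apply: span_sub => x xI; apply: sub_Ucap.
    exact: submx_trans (hI1 x xI A0 A0P) (span_mono _ (subsetDl D A0)).
  by move=> A; rewrite mem_enum; exact: hI1 x xI A.
have rIU : (\rank (span p I) <= \rank U)%N := mxrankS sIU.
suff hrd : (rd d I + k = #|P|)%N.
  by rewrite /balanced -hrd PoszD addrK.
rewrite -hp rig_span -hUk; congr (_ + _)%N.
case: (posnP (\rank U)) => [U0 | Upos].
  by apply/eqP; rewrite U0 -leqn0 -U0.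
set T := technicolour D P.
have hprops : forall y : 'rV[RR]_(n*d), (y <= U)%MS ->
   [/\ forall w i, w \notin T -> vec_mx y w i = 0,
       forall i, \sum_w vec_mx y w i = 0 &
       forall i j, \sum_w (vec_mx y w i * p w j - vec_mx y w j * p w i) = 0].
  move=> y hy; have hyD := submx_trans hy (Ucap_subW _ _ _); split.
  - by move=> w i; exact: vanish hpart hy.
  - by move=> i; exact: span_colsum hyD.
  - by move=> i j; exact: span_rot hyD.
have zeroU : (forall y : 'rV[RR]_(n*d), (y <= U)%MS -> y = 0) -> False.
  move=> H; have U0 : U = 0 by apply/row_matrixP => i; rewrite row0; apply: H; exact: row_sub.
  by move: Upos; rewrite U0 mxrank0.
have mT : forall w, (w \in T) = (w \in enum T) by move=> w; rewrite mem_enum.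
have szT : (size (enum T) <= 2)%N by rewrite -cardE.
have uT := enum_uniq (mem T).
have [e0 hUe] : exists e0, (U <= rigidity_row p e0)%MS.
  case E: (enum T) szT uT => [|a [|b [|c s]]] // _ uT.
  - exfalso; apply: zeroU => y hy; have [hz _ _] := hprops y hy.
    rewrite -[y]vec_mxK; have -> : vec_mx y = 0.
      by apply/matrixP => w i; rewrite [RHS]mxE hz // mT E.
    by rewrite linear0.
  - exfalso; apply: zeroU => y hy; have [hz hc _] := hprops y hy.
    have hz' : forall w i, w != a -> vec_mx y w i = 0.
      by move=> w i wa; apply: hz; rewrite mT E mem_seq1.
    have ha : forall i, vec_mx y a i = 0.
      move=> i; have := hc i; rewrite (bigD1 a) //= big1 ?addr0 // => w wa; exact: hz' w i wa.
    rewrite -[y]vec_mxK; have -> : vec_mx y = 0.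
      apply/matrixP => w i; rewrite [RHS]mxE; case: (eqVneq w a) => [-> | wa]; first exact: ha.
      exact: hz'.
    by rewrite linear0.
  - move: uT; rewrite /= mem_seq1 andbT => ab.
    have [e0 he0] : exists e0 : edge n, forall w, (w \notin [:: a; b]) = (w != (val e0).1) && (w != (val e0).2).
      case: (ltnP a b) => hab.
        by exists (exist _ (a,b) hab) => w /=; rewrite !inE negb_or.
      have hba : (b < a)%N.
        rewrite ltn_neqAle hab andbT; apply/eqP => h; move: ab; by rewrite (ord_inj h) eqxx.
      by exists (exist _ (b,a) hba) => w /=; rewrite !inE negb_or andbC.
    exists e0; apply/row_subP => i; have hy := row_sub i U; have [hz hc hr] := hprops _ hy.
    apply: two_vertex => //; first exact: row_nz.
    by move=> w j h1 h2; apply: hz; rewrite mT E he0 h1 h2.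
have hrow : (rigidity_row p e0 <= U)%MS.
  have := mxrank_leqif_eq hUe => [[_ h]].
  have : (U == rigidity_row p e0)%MS.
    rewrite -h; have := mxrankS hUe; have := rank_leq_row (rigidity_row p e0); move: Upos.
    move=> *; apply/eqP; lia.
  by case/andP.
have e0I : e0 \in I.
  by apply: hI2 => A AP; apply: submx_trans hrow (Ucap_sub _ _ _); rewrite mem_enum.
apply/eqP; rewrite eqn_leq rIU /=.
exact: leq_trans (mxrankS hUe) (mxrankS (vr_span p e0I)).
Qed.
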